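(* Let $n\ge1$ and $\lambda=(\lambda_1,\dots,\lambda_n)\in\mathbb{R}^n$ with $0<\lambda_1\le\cdots\le\lambda_n$, and let $(\mathfrak{a},\langle\cdot,\cdot\rangle_{\mathfrak{a}})$ be an abelian quadratic Lie algebra. Endow $\mathrm{osc}(\lambda)\times\mathfrak{a}$ with the product quadratic structure. Then every derivation $D$ of $\mathrm{osc}(\lambda)\times\mathfrak{a}$ which is skew-symmetric with respect to the product form satisfies $D(e_0)=0$. In particular, $\mathrm{osc}(\lambda)\times\mathfrak{a}$ admits no $k$-symplectic structure for any $k\ge1$.
   Context: The oscillator Lie algebra $\mathrm{osc}(\lambda)$ has basis $\{e_{-1},e_0,e_i,\check e_i\}_{i=1,\dots,n}$ with nonvanishing brackets $[e_{-1},e_i]=\lambda_i\check e_i$, $[e_{-1},\check e_i]=-\lambda_ie_i$, $[e_i,\check e_i]=e_0$ (and those obtained by antisymmetry), and invariant quadratic form given for $x=x_{-1}e_{-1}+x_0e_0+\sum_i(x_ie_i+y_i\check e_i)$ by $\langle x,x\rangle=2x_{-1}x_0+\sum_i\frac{1}{\lambda_i}(x_i^2+y_i^2)$. An abelian quadratic Lie algebra is an abelian real Lie algebra with a nondegenerate symmetric bilinear form; the product structure is the Lie algebra direct product with orthogonal sum of forms. A $k$-symplectic structure on a real Lie algebra $\mathfrak{k}$ of dimension $m(k+1)$ ($m,k\ge1$) is a pair consisting of a Lie subalgebra $\mathfrak{h}\subset\mathfrak{k}$ of dimension $mk$ and a family $(\theta_1,\dots,\theta_k)$ of skew-symmetric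 bilinear forms on $\mathfrak{k}$ such that: (i) $\bigcap_{i=1}^k\ker\theta_i=\{0\}$, where $\ker\theta_i=\{u:\theta_i(u,v)=0\ \forall v\}$; (ii) each $\theta_i$ is a 2-cocycle: $\theta_i([u,v],w)+\theta_i([v,w],u)+\theta_i([w,u],v)=0$ for all $u,v,w$; (iii) $\theta_i(u,v)=0$ for all $u,v\in\mathfrak{h}$ and all $i$. *)

(* Defs.v *)
From HB Require Import structures.
From mathcomp Require Import all_boot all_order all_algebra.
From mathcomp Require Import reals.
Set Implicit Arguments. Unset Strict Implicit. Unset Printing Implicit Defensive.
Import Order.TTheory GRing.Theory Num.Theory.
Local Open Scope ring_scope.

(* The underlying space of osc(lambda) x a is R^(2 + n + n + p), encoded as
   row vectors 'rV[R]_(2 + n + n + p) with coordinates ordered as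
   (x_{-1}, x_0 | x_1 .. x_n | y_1 .. y_n | a_1 .. a_p),
   i.e. in the basis (e_{-1}, e_0, e_1..e_n, check e_1..check e_n, basis of a). *)

Section Osc.
Variables (R : realType) (n p : nat).

Definition dimOA := (2 + n + n + p)%N.

Definition i_m1 : 'I_dimOA := lshift p (lshift n (lshift n (@Ordinal 2 0 isT))).
Definition i_0  : 'I_dimOA := lshift p (lshift n (lshift n (@Ordinal 2 1 isT))).
Definition i_e (i : 'I_n) : 'I_dimOA := lshift p (lshift n (rshift 2 i)).
Definition i_ce (i : 'I_n) : 'I_dimOA := lshift p (rshift (2 + n) i).
Definition i_a (j : 'I_p) : 'I_dimOA := rshift (2 + n + n) j.

Definition e0 : 'rV[R]_dimOA := delta_mx 0 i_0.

Variable lam : 'I_n -> R.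

(* Lie bracket of osc(lambda) x a (a abelian):
   [e_{-1}, e_i] = lam_i check e_i, [e_{-1}, check e_i] = - lam_i e_i,
   [e_i, check e_i] = e_0. *)
Definition oscBr (u v : 'rV[R]_dimOA) : 'rV[R]_dimOA :=
  \row_(k < dimOA)
    (if k == i_0 then
       \sum_(i < n) (u 0 (i_e i) * v 0 (i_ce i) - u 0 (i_ce i) * v 0 (i_e i))
     else \sum_(i < n)
       ((k == i_e i)%:R * (- lam i * (u 0 i_m1 * v 0 (i_ce i) - v 0 i_m1 * u 0 (i_ce i)))
        + (k == i_ce i)%:R * (lam i * (u 0 i_m1 * v 0 (i_e i) - v 0 i_m1 * u 0 (i_e i))))).

Definition oscForm (B : 'M[R]_p) (u v : 'rV[R]_dimOA) : R :=
  u 0 i_m1 * v 0 i_0 + u 0 i_0 * v 0 i_m1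
  + \sum_(i < n) (u 0 (i_e i) * v 0 (i_e i) + u 0 (i_ce i) * v 0 (i_ce i)) / lam i
  + \sum_(j < p) \sum_(l < p) u 0 (i_a j) * B j l * v 0 (i_a l).

End Osc.

(* A subalgebra h of dimension m*k is given by the row space of a
   matrix H of rank m*k; the skew-symmetric bilinear forms theta_i are
   (u, v) |-> u T_i v^T with T_i skew-symmetric matrices. *)
Definition k_symplectic (R : realType) (N : nat)
    (br : 'rV[R]_N -> 'rV[R]_N -> 'rV[R]_N) (k : nat) : Prop :=
  exists m : nat, (0 < m)%N /\ N = (m * k.+1)%N /\
  exists (H : 'M[R]_(m * k, N)) (T : 'I_k -> 'M[R]_N),
    let theta i (u v : 'rV[R]_N) := (u *m T i *m v^T) 0 0 in
    \rank H = (m * k)%N /\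
    (forall u v, (u <= H)%MS -> (v <= H)%MS -> (br u v <= H)%MS) /\
    (forall i, (T i)^T = - T i) /\
    (forall u, (forall i v, theta i u v = 0) -> u = 0) /\
    (forall i u v w,
        theta i (br u v) w + theta i (br v w) u + theta i (br w u) v = 0) /\
    (forall i u v, (u <= H)%MS -> (v <= H)%MS -> theta i u v = 0).

(* Main.v *)
Require Import Defs.
From HB Require Import structures.
From mathcomp Require Import all_boot all_order all_algebra.
From mathcomp Require Import reals.
From mathcomp Require Import zify ring lra.
Import Order.TTheory GRing.Theory Num.Theory.
Local Open Scope ring_scope.

Section H.
Variables (R : realType) (n p : nat) (lam : 'I_n -> R).
Local Notation N := (dimOA n p).
Local Notation m1 := (i_m1 n p).
Local Notation z := (i_0 n p).
Local Notation ie := (@i_e n p).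
Local Notation ic := (@i_ce n p).
Local Notation ia := (@i_a n p).
Local Notation dl a := (delta_mx 0 a : 'rV[R]_N).

Lemma v_m1 : (m1 : nat) = 0%N. Proof. by []. Qed.
Lemma v_z : (z : nat) = 1%N. Proof. by []. Qed.
Lemma v_e i : (ie i : nat) = (2 + i)%N. Proof. by []. Qed.
Lemma v_c i : (ic i : nat) = (2 + n + i)%N. Proof. by []. Qed.
Lemma v_a j : (ia j : nat) = (2 + n + n + j)%N. Proof. by []. Qed.

Ltac neq := apply/negbTE/eqP => /(congr1 (@nat_of_ord _)); rewrite ?v_m1 ?v_z ?v_e ?v_c ?v_a;
  repeat match goal with i : 'I_ _ |- _ => move: (ltn_ord i); move: (nat_of_ord i) => ?; clear i end; lia.

Lemma e_m1z : (m1 == z) = false. Proof. neq. Qed.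
Lemma e_zm1 : (z == m1) = false. Proof. neq. Qed.
Lemma e_m1e i : (m1 == ie i) = false. Proof. neq. Qed.
Lemma e_em1 i : (ie i == m1) = false. Proof. neq. Qed.
Lemma e_m1c i : (m1 == ic i) = false. Proof. neq. Qed.
Lemma e_cm1 i : (ic i == m1) = false. Proof. neq. Qed.
Lemma e_m1a i : (m1 == ia i) = false. Proof. neq. Qed.
Lemma e_am1 i : (ia i == m1) = false. Proof. neq. Qed.
Lemma e_ze i : (z == ie i) = false. Proof. neq. Qed.
Lemma e_ez i : (ie i == z) = false. Proof. neq. Qed.
Lemma e_zc i : (z == ic i) = false. Proof. neq. Qed.
Lemma e_cz i : (ic i == z) = false. Proof. neq. Qed.
Lemma e_za i : (z == ia i) = false. Proof. neq. Qed.
Lemma e_az i : (ia i == z) = false. Proof. neq. Qed.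
Lemma e_ec i j : (ie i == ic j) = false. Proof. neq. Qed.
Lemma e_ce i j : (ic i == ie j) = false. Proof. neq. Qed.
Lemma e_ea i j : (ie i == ia j) = false. Proof. neq. Qed.
Lemma e_ae i j : (ia i == ie j) = false. Proof. neq. Qed.
Lemma e_ca i j : (ic i == ia j) = false. Proof. neq. Qed.
Lemma e_ac i j : (ia i == ic j) = false. Proof. neq. Qed.
Lemma e_ee i j : (ie i == ie j) = (i == j).
Proof. apply/eqP/eqP => [/(congr1 (@nat_of_ord _))|->//]; rewrite !v_e => H; apply/ord_inj => /=; lia. Qed.
Lemma e_cc i j : (ic i == ic j) = (i == j).
Proof. apply/eqP/eqP => [/(congr1 (@nat_of_ord _))|->//]; rewrite !v_c => H; apply/ord_inj => /=; lia. Qed.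
Lemma e_aa i j : (ia i == ia j) = (i == j).
Proof. apply/eqP/eqP => [/(congr1 (@nat_of_ord _))|->//]; rewrite !v_a => H; apply/ord_inj => /=; lia. Qed.

Definition idxE := (e_m1z, e_zm1, e_m1e, e_em1, e_m1c, e_cm1, e_m1a, e_am1, e_ze, e_ez,
  e_zc, e_cz, e_za, e_az, e_ec, e_ce, e_ea, e_ae, e_ca, e_ac, e_ee, e_cc, e_aa).

Lemma idx_cases (k : 'I_N) :
  k = m1 \/ k = z \/ (exists i, k = ie i) \/ (exists i, k = ic i) \/ (exists j, k = ia j).
Proof.
case: k => k Hk; have Hk' := Hk; rewrite /dimOA in Hk'.
case: (ltnP k 1) => H1.
  by left; apply/ord_inj; rewrite v_m1 /=; lia.
case: (ltnP k 2) => H2.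
  by right; left; apply/ord_inj; rewrite v_z /=; lia.
case: (ltnP k (2 + n)) => H3.
  have Hi : (k - 2 < n)%N by lia.
  by right; right; left; exists (Ordinal Hi); apply/ord_inj; rewrite v_e /=; lia.
case: (ltnP k (2 + n + n)) => H4.
  have Hi : (k - (2 + n) < n)%N by lia.
  by right; right; right; left; exists (Ordinal Hi); apply/ord_inj; rewrite v_c /=; lia.
have Hi : (k - (2 + n + n) < p)%N by lia.
by right; right; right; right; exists (Ordinal Hi); apply/ord_inj; rewrite v_a /=; lia.
Qed.

Lemma dlE a k : dl a 0 k = (k == a)%:R.
Proof. by rewrite mxE eqxx. Qed.

Lemma br_m1 u v : oscBr lam u v 0 m1 = 0.
Proof. rewrite mxE idxE; apply: big1 => i _; rewrite !idxE /= ?mulr0n ?mulr1n; ring. Qed.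
Lemma br_a u v j : oscBr lam u v 0 (ia j) = 0.
Proof. rewrite mxE idxE; apply: big1 => i _; rewrite !idxE /= ?mulr0n ?mulr1n; ring. Qed.
Lemma br_z u v : oscBr lam u v 0 z =
  \sum_(i < n) (u 0 (ie i) * v 0 (ic i) - u 0 (ic i) * v 0 (ie i)).
Proof. by rewrite mxE eqxx. Qed.
Lemma br_e u v j : oscBr lam u v 0 (ie j) =
  - lam j * (u 0 m1 * v 0 (ic j) - v 0 m1 * u 0 (ic j)).
Proof.
rewrite mxE idxE (bigD1 j) //= !idxE eqxx /= ?mulr0n ?mulr1n big1 ?addr0 => [|i /negbTE Hi]; first ring.
rewrite !idxE eq_sym Hi /= ?mulr0n ?mulr1n; ring.
Qed.
Lemma br_c u v j : oscBr lam u v 0 (ic j) =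
  lam j * (u 0 m1 * v 0 (ie j) - v 0 m1 * u 0 (ie j)).
Proof.
rewrite mxE idxE (bigD1 j) //= !idxE eqxx /= ?mulr0n ?mulr1n big1 ?addr0 => [|i /negbTE Hi]; first ring.
rewrite !idxE eq_sym Hi /= ?mulr0n ?mulr1n; ring.
Qed.

Ltac kcase k := case: (idx_cases k) => [->|[->|[[i ->]|[[i ->]|[i ->]]]]].

Lemma br0l (u v : 'rV[R]_N) : u 0 m1 = 0 -> (forall i, u 0 (ie i) = 0) -> (forall i, u 0 (ic i) = 0) ->
  oscBr lam u v = 0.
Proof.
move=> H1 H2 H3; apply/rowP => k; rewrite [RHS]mxE; kcase k;
  rewrite ?br_m1 ?br_a ?br_e ?br_c ?br_z ?H1 ?H2 ?H3; try ring.
by apply: big1 => i _; rewrite H2 H3; ring.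
Qed.

Lemma br0r (u v : 'rV[R]_N) : v 0 m1 = 0 -> (forall i, v 0 (ie i) = 0) -> (forall i, v 0 (ic i) = 0) ->
  oscBr lam u v = 0.
Proof.
move=> H1 H2 H3; apply/rowP => k; rewrite [RHS]mxE; kcase k;
  rewrite ?br_m1 ?br_a ?br_e ?br_c ?br_z ?H1 ?H2 ?H3; try ring.
by apply: big1 => i _; rewrite H2 H3; ring.
Qed.

Ltac dsimp := rewrite ?dlE ?idxE ?eqxx /= ?mulr0n ?mulr1n.

Lemma br_cm1 j : oscBr lam (dl (ic j)) (dl m1) = lam j *: dl (ie j).
Proof.
apply/rowP => k; rewrite [RHS]mxE; kcase k;
  rewrite ?br_m1 ?br_a ?br_e ?br_c ?br_z; dsimp; try ring.
- by rewrite big1 ?mulr0 // => l _; dsimp; ring.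
- case: (eqVneq i j) => [->|/negbTE H]; dsimp; rewrite ?H /= ?mulr0n; ring.
Qed.

Lemma br_em1 j : oscBr lam (dl (ie j)) (dl m1) = - lam j *: dl (ic j).
Proof.
apply/rowP => k; rewrite [RHS]mxE; kcase k;
  rewrite ?br_m1 ?br_a ?br_e ?br_c ?br_z; dsimp; try ring.
- by rewrite big1 ?mulr0 // => l _; dsimp; ring.
- case: (eqVneq i j) => [->|/negbTE H]; dsimp; rewrite ?H /= ?mulr0n; ring.
Qed.

Lemma br_m1e j : oscBr lam (dl m1) (dl (ie j)) = lam j *: dl (ic j).
Proof.
apply/rowP => k; rewrite [RHS]mxE; kcase k;
  rewrite ?br_m1 ?br_a ?br_e ?br_c ?br_z; dsimp; try ring.
- by rewrite big1 ?mulr0 // => l _; dsimp; ring.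
- case: (eqVneq i j) => [->|/negbTE H]; dsimp; rewrite ?H /= ?mulr0n; ring.
Qed.

Lemma br_ec j : oscBr lam (dl (ie j)) (dl (ic j)) = dl z.
Proof.
apply/rowP => k; kcase k;
  rewrite ?br_m1 ?br_a ?br_e ?br_c ?br_z; dsimp; try ring.
rewrite (bigD1 j) //= big1 => [|l /negbTE H]; dsimp; rewrite ?H /= ?mulr0n; ring.
Qed.

Variable B : 'M[R]_p.

Lemma fm_e (u : 'rV[R]_N) i : oscForm lam B u (dl (ie i)) = u 0 (ie i) / lam i.
Proof.
rewrite /oscForm; dsimp; rewrite (bigD1 i) //= big1 => [|l /negbTE H]; dsimp; rewrite ?H /= ?mulr0n.
  rewrite big1 => [|j _]; last by rewrite big1 // => l _; dsimp; ring.
  ring.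
ring.
Qed.
Lemma fe_m (u : 'rV[R]_N) i : oscForm lam B (dl (ie i)) u = u 0 (ie i) / lam i.
Proof.
rewrite /oscForm; dsimp; rewrite (bigD1 i) //= big1 => [|l /negbTE H]; dsimp; rewrite ?H /= ?mulr0n.
  rewrite big1 => [|j _]; last by rewrite big1 // => l _; dsimp; ring.
  ring.
ring.
Qed.
Lemma fm_c (u : 'rV[R]_N) i : oscForm lam B u (dl (ic i)) = u 0 (ic i) / lam i.
Proof.
rewrite /oscForm; dsimp; rewrite (bigD1 i) //= big1 => [|l /negbTE H]; dsimp; rewrite ?H /= ?mulr0n.
  rewrite big1 => [|j _]; last by rewrite big1 // => l _; dsimp; ring.
  ring.
ring.
Qed.
Lemma fc_m (u : 'rV[R]_N) i : oscForm lam B (dl (ic i)) u = u 0 (ic i) / lam i.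
Proof.
rewrite /oscForm; dsimp; rewrite (bigD1 i) //= big1 => [|l /negbTE H]; dsimp; rewrite ?H /= ?mulr0n.
  rewrite big1 => [|j _]; last by rewrite big1 // => l _; dsimp; ring.
  ring.
ring.
Qed.

Definition th (T : 'M[R]_N) (u v : 'rV[R]_N) := (u *m T *m v^T) 0 0.

Lemma thZ T c u v : th T (c *: u) v = c * th T u v.
Proof. by rewrite /th -!scalemxAl mxE. Qed.
Lemma th0 T v : th T 0 v = 0.
Proof. by rewrite /th !mul0mx mxE. Qed.
Lemma thN T u v : th T (- u) v = - th T u v.
Proof. by rewrite /th !mulNmx mxE. Qed.
Lemma th_skew T u v : T^T = - T -> th T v u = - th T u v.
Proof.
move=> HT; rewrite /th.
have -> : (v *m T *m u^T) 0 0 = ((v *m T *m u^T)^T) 0 0 by rewrite [RHS]mxE.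
by rewrite !trmx_mul trmxK HT mulNmx mulmxN mulmxA [LHS]mxE.
Qed.
Lemma th_diag T u : T^T = - T -> th T u u = 0.
Proof.
move=> HT; have := th_skew T u u HT => H.
have : 2 * th T u u = 0 by rewrite mulr2n mulrDl mul1r {1}H; ring.
by move/eqP; rewrite mulf_eq0 pnatr_eq0 /= => /eqP.
Qed.
Lemma th_dl T u : (forall k, th T u (dl k) = 0) -> forall v, th T u v = 0.
Proof.
move=> H v; rewrite /th mxE; apply: big1 => k _.
have := H k; rewrite /th mxE => Hk.
have -> : (u *m T) 0 k = \sum_j (u *m T) 0 j * (dl k)^T j 0.
  rewrite (bigD1 k) //= big1 => [|j /negbTE Hj]; rewrite !mxE ?eqxx ?Hj /= ?mulr0n ?mulr1n; ring.
by rewrite Hk mul0r.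
Qed.

Lemma part1 (n0 : (0 < n)%N) (lpos : forall i, 0 < lam i) (D : 'M[R]_N) :
  (forall u v, oscBr lam u v *m D = oscBr lam (u *m D) v + oscBr lam u (v *m D)) ->
  (forall u v, oscForm lam B (u *m D) v + oscForm lam B u (v *m D) = 0) ->
  e0 R n p *m D = 0.
Proof.
move=> Hder Hsk.
have lneq j : lam j != 0 by rewrite gt_eqF.
set x := e0 R n p *m D.
have cent v : oscBr lam x v = 0.
  have h0 y : oscBr lam (dl z) y = 0 by apply: br0l => *; dsimp.
  by have := Hder (dl z) v; rewrite !h0 mul0mx addr0 => /esym.
have xc j : x 0 (ic j) = 0.
  have := congr1 (fun w : 'rV[R]_N => w 0 (ie j)) (cent (dl m1)); rewrite /= br_e; dsimp.
  rewrite [X in _ = X -> _]mxE mulr0 mul1r sub0r mulrN mulNr opprK => /eqP; rewrite mulf_eq0 (negbTE (lneq j)) /=.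
  by move/eqP.
have xe j : x 0 (ie j) = 0.
  have := congr1 (fun w : 'rV[R]_N => w 0 (ic j)) (cent (dl m1)); rewrite /= br_c; dsimp.
  rewrite [X in _ = X -> _]mxE mulr0 mul1r sub0r mulrN => /eqP; rewrite oppr_eq0 mulf_eq0 (negbTE (lneq j)) /=.
  by move/eqP.
pose i0 := Ordinal n0.
have Hx : x = oscBr lam (dl (ie i0) *m D) (dl (ic i0)) + oscBr lam (dl (ie i0)) (dl (ic i0) *m D).
  by rewrite -Hder br_ec.
have ae : (dl (ie i0) *m D) 0 (ie i0) = 0.
  have := Hsk (dl (ie i0)) (dl (ie i0)); rewrite fm_e fe_m -mulrDl => /eqP.
  rewrite mulf_eq0 invr_eq0 (negbTE (lneq i0)) orbF -mulr2n mulrn_eq0 /=.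
  by move/eqP.
have bc : (dl (ic i0) *m D) 0 (ic i0) = 0.
  have := Hsk (dl (ic i0)) (dl (ic i0)); rewrite fm_c fc_m -mulrDl => /eqP.
  rewrite mulf_eq0 invr_eq0 (negbTE (lneq i0)) orbF -mulr2n mulrn_eq0 /=.
  by move/eqP.
apply/rowP => k; rewrite [RHS]mxE; kcase k; rewrite ?xe ?xc //; rewrite Hx mxE.
- by rewrite !br_m1 addr0.
- rewrite !br_z (bigD1 i0) //= big1 => [|l /negbTE H]; dsimp; rewrite ?H /= ?mulr0n.
    rewrite (bigD1 i0) //= big1 => [|l /negbTE H]; dsimp; rewrite ?H /= ?mulr0n.
      by rewrite ae bc; ring.
    ring.
  ring.
- by rewrite !br_a addr0.
Qed.

Lemma th_e0 (n0 : (0 < n)%N) (lpos : forall i, 0 < lam i) (T : 'M[R]_N) :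
  T^T = - T ->
  (forall u v w, th T (oscBr lam u v) w + th T (oscBr lam v w) u + th T (oscBr lam w u) v = 0) ->
  forall v, th T (dl z) v = 0.
Proof.
move=> HT coc.
have lneq j : lam j != 0 by rewrite gt_eqF.
have h0 y : oscBr lam (dl z) y = 0 by apply: br0l => *; dsimp.
have h0' y : oscBr lam y (dl z) = 0 by apply: br0r => *; dsimp.
pose i0 := Ordinal n0.
apply: th_dl => k; kcase k.
- have := coc (dl (ie i0)) (dl (ic i0)) (dl m1).
  rewrite br_ec br_cm1 br_m1e !thZ !th_diag // !mulr0 !addr0.
  by [].
- by rewrite th_diag.
- have := coc (dl m1) (dl z) (dl (ic i)).
  rewrite h0 h0' br_cm1 !th0 thZ !add0r => /eqP; rewrite mulf_eq0 (negbTE (lneq i)) /= => /eqP H.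
  by rewrite th_skew // H oppr0.
- have := coc (dl m1) (dl z) (dl (ie i)).
  rewrite h0 h0' br_em1 !th0 thZ !add0r => /eqP; rewrite mulf_eq0 oppr_eq0 (negbTE (lneq i)) /= => /eqP H.
  by rewrite th_skew // H oppr0.
- have := coc (dl (ie i0)) (dl (ic i0)) (dl (ia i)).
  have -> : oscBr lam (dl (ic i0)) (dl (ia i)) = 0 by apply: br0r => *; dsimp.
  have -> : oscBr lam (dl (ia i)) (dl (ie i0)) = 0 by apply: br0l => *; dsimp.
  by rewrite br_ec !th0 !addr0.
Qed.

Lemma part2 (n0 : (0 < n)%N) (lpos : forall i, 0 < lam i) k :
  (0 < k)%N -> ~ k_symplectic (@oscBr R n p lam) k.
Proof.
move=> k0 [m [m0 [hN [H [T [rk [sub [skewT [ker [coc iso]]]]]]]]]].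
have e0z : dl z = 0.
  apply: ker => i v.
  exact: (th_e0 n0 lpos (T i) (skewT i) (coc i) v).
have := congr1 (fun w : 'rV[R]_N => w 0 z) e0z; rewrite /= dlE eqxx mxE /= => /eqP.
by rewrite oner_eq0.
Qed.

End H.

Theorem mainTheorem9 (R : realType) (n p : nat) (lam : 'I_n -> R)
    (B : 'M[R]_p) :
  (0 < n)%N ->
  (forall i, 0 < lam i) ->
  (forall i j : 'I_n, (i <= j)%N -> lam i <= lam j) ->
  B^T = B -> B \in unitmx ->
  (forall D : 'M[R]_(dimOA n p),
     (forall u v, oscBr lam u v *m D = oscBr lam (u *m D) v + oscBr lam u (v *m D)) ->
     (forall u v, oscForm lam B (u *m D) v + oscForm lam B u (v *m D) = 0) ->
     e0 R n p *m D = 0)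
  /\ (forall k : nat, (0 < k)%N -> ~ k_symplectic (@oscBr R n p lam) k).
Proof.
move=> n0 lpos _ _ _; split.
- move=> D; exact: (@part1 R n p lam B n0 lpos D).
- move=> k; exact: (@part2 R n p lam n0 lpos k).
Qed.
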